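(* Let $N\ge2$, $\zeta(t)=\max\{t,t^N\}$ for $t\ge0$, $\Phi_1(t)=\exp(|t|^{N/(N-1)})-\sum_{j=0}^{N-2}\frac{|t|^{Nj/(N-1)}}{j!}$, and let $\tilde\Phi_1(s)=\sup_{t\ge0}\{st-\Phi_1(t)\}$ ($s\ge0$) be its conjugate function. Then (i) $\tilde\Phi_1\big(\Phi_1(r)/r\big)\le\Phi_1(r)$ for all $r>0$; (ii) $\tilde\Phi_1(tr)\le\zeta(t)\tilde\Phi_1(r)$ for all $t,r\ge0$. Consequently $\tilde\Phi_1$ satisfies the $\Delta_2$-condition and $E_{\tilde\Phi_1}(\mathbb{R}^N)=L^{\tilde\Phi_1}(\mathbb{R}^N)$.
   Context: An $N$-function is a continuous, convex, even $\Theta:\mathbb{R}\to[0,\infty)$ with $\Theta(t)=0$ iff $t=0$, $\Theta(t)/t\to0$ as $t\to0$ and $\Theta(t)/t\to\infty$ as $t\to\infty$. $\Theta$ satisfies the $\Delta_2$-condition if $\Theta(2t)\le C\Theta(t)$ for all $t\ge0$ and some $C>0$. The Orlicz space $L^\Theta(\mathbb{R}^N)=\{u\in L^1_{loc}(\mathbb{R}^N):\int\Theta(|u|/\lambda)dx<\infty\text{ for some }\lambda>0\}$ carries the Luxemburg norm $\|u\|_\Theta=\inf\{\lambda>0:\int\Theta(|u|/\lambda)dx\le1\}$, and $E_\Theta(\mathbb{R}^N)$ is the closure in $L^\Theta(\mathbb{R}^N)$ of the functions with bounded support. *)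

(* Defs.v *)
From HB Require Import structures.
From mathcomp Require Import all_boot all_order all_algebra.
From mathcomp Require Import all_classical all_reals all_analysis.
Set Implicit Arguments. Unset Strict Implicit. Unset Printing Implicit Defensive.
Import Order.TTheory GRing.Theory Num.Theory.
Import numFieldNormedType.Exports.
Local Open Scope classical_set_scope.
Local Open Scope ring_scope.

Definition zeta {R : realType} (N : nat) (t : R) : R := Num.max t (t ^+ N).

Definition Phi1 {R : realType} (N : nat) (t : R) : R :=
  expR (`|t| `^ (N%:R / (N.-1)%:R)) -
  \sum_(0 <= j < N.-1) (`|t| `^ (N%:R * j%:R / (N.-1)%:R)) / (j`!)%:R.

(* Conjugate function: Phi1~(s) = sup_{t >= 0} (s t - Phi1(t)), s >= 0;
   extended evenly to s < 0 (N-functions are even). *)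
Definition Phi1t {R : realType} (N : nat) (s : R) : R :=
  sup [set `|s| * t - Phi1 N t | t in [set t : R | 0 <= t]].

Definition Delta2 {R : realType} (Theta : R -> R) : Prop :=
  exists C : R, 0 < C /\ forall t : R, 0 <= t -> Theta (2 * t) <= C * Theta t.

(* R^N with Lebesgue measure, as iterated product R x (R x (... x R))  *)
(* together with the sup-norm (for "bounded support" / local balls).   *)

Unset Implicit Arguments.
Record mspace (R : realType) := MSpace {
  ms_disp : measure_display;
  ms_car : measurableType ms_disp;
  ms_mu : set ms_car -> \bar R;
  ms_norm : ms_car -> R }.
Set Implicit Arguments.
Arguments ms_car {R} m.
Arguments ms_mu {R} m.
Arguments ms_norm {R} m.

(* RN R n is R^(n+1) *)
Fixpoint RN (R : realType) (n : nat) : mspace R :=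
  match n with
  | 0 => @MSpace R _ (measurableTypeR R) (@lebesgue_measure R) (fun x => `|x|)
  | n'.+1 =>
      let S := RN R n' in
      @MSpace R _ (measurableTypeR R * ms_car S)%type
        (product_measure1 (@lebesgue_measure R) (ms_mu S))
        (fun x => Num.max `|x.1| (ms_norm S x.2))
  end.

Definition Rn (R : realType) (N : nat) : mspace R := RN R N.-1.

Section Orlicz.
Context {R : realType} (X : mspace R) (Theta : R -> R).

Definition modular (u : ms_car X -> R) (l : R) : \bar R :=
  (\int[ms_mu X]_x (Theta (`|u x| / l))%:E)%E.

Definition LOrlicz : set (ms_car X -> R) :=
  [set u | measurable_fun setT u /\
     (forall r : R, (ms_mu X).-integrable [set x | ms_norm X x <= r] (EFin \o u)) /\
     exists l : R, 0 < l /\ (modular u l < +oo)%E].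

Definition luxemburg (u : ms_car X -> R) : \bar R :=
  ereal_inf [set l%:E | l in [set l : R | 0 < l /\ (modular u l <= 1)%E]].

Definition bounded_support (v : ms_car X -> R) : Prop :=
  exists r : R, forall x, r < ms_norm X x -> v x = 0.

Definition EOrlicz : set (ms_car X -> R) :=
  [set u | LOrlicz u /\ forall e : R, 0 < e ->
     exists v, LOrlicz v /\ bounded_support v /\
       (luxemburg (fun x => (u x - v x)%R) < e%:E)%E].

End Orlicz.

Arguments modular {R} X Theta u l.
Arguments LOrlicz {R} X Theta.
Arguments luxemburg {R} X Theta u.
Arguments bounded_support {R} X v.
Arguments EOrlicz {R} X Theta.

(* Main.v *)
Require Import Defs.
From HB Require Import structures.
From mathcomp Require Import all_boot all_order all_algebra.
From mathcomp Require Import all_classical all_reals all_analysis.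
From mathcomp Require Import measurable_realfun.
From mathcomp Require Import lra ring.
Import Order.TTheory GRing.Theory Num.Theory.
Import numFieldNormedType.Exports.
Set Implicit Arguments. Unset Strict Implicit.
Local Open Scope classical_set_scope.
Local Open Scope ring_scope.

Section An.
Variable R : realType.

Definition Fm (m : nat) (z : R) : R :=
  expR z - \sum_(0 <= j < m) z ^+ j / (j`!)%:R.

Lemma incr_from (u : nat -> R) m :
  (forall n, (m <= n)%N -> u n <= u n.+1) -> forall n, (m <= n)%N -> u m <= u n.
Proof.
move=> h; elim=> [|n IH]; first by rewrite leqn0 => /eqP ->.
rewrite leq_eqVlt => /orP[/eqP -> //|]; rewrite ltnS => hmn.
exact: le_trans (IH hmn) (h _ hmn).
Qed.

Lemma seriesE (z : R) n : series (exp_coeff z) n = \sum_(0 <= j < n) z ^+ j / (j`!)%:R.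
Proof. by []. Qed.

Lemma Fm_ge m (z : R) : 0 <= z -> z ^+ m / (m`!)%:R <= Fm m z.
Proof.
move=> z0; rewrite /Fm lerBrDr -seriesE addrC -seriesSr.
rewrite /expR; apply: limr_ge; first exact: is_cvg_series_exp_coeff.
near=> n; apply: (@incr_from (series (exp_coeff z)) m.+1); last first.
  by near: n; exists m.+1.
by move=> k _; rewrite seriesSr lerDl exp_coeff_ge0.
Unshelve. all: by end_near.
Qed.

Lemma Fm_scale m (z mu : R) : (1 <= m)%N -> 0 <= z -> 1 <= mu ->
  mu * Fm m z <= Fm m (mu * z).
Proof.
move=> m1 z0 mu1.
pose G n := series (exp_coeff (mu * z)) n - mu * series (exp_coeff z) n.
have cz := is_cvg_series_exp_coeff z.
have cmz := is_cvg_series_exp_coeff (mu * z).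
have limG : limn G = expR (mu * z) - mu * expR z.
  rewrite /G /expR limB //; last by apply: is_cvgZr.
  by rewrite limZr.
suff : G m <= limn G.
  by rewrite limG /G /Fm -!seriesE; lra.
apply: limr_ge; first by apply: is_cvgB => //; apply: is_cvgZr.
near=> n; apply: (@incr_from G m); last by near: n; exists m.
move=> k mk; rewrite /G !seriesSr /exp_coeff /=.
suff : mu * (z ^+ k / (k`!)%:R) <= (mu * z) ^+ k / (k`!)%:R by lra.
rewrite exprMn mulrA ler_wpM2r ?divr_ge0 ?exprn_ge0 //.
have k1 : (1 <= k)%N by apply: leq_trans mk.
by rewrite ler_wpM2r ?exprn_ge0 // ler_eXnr.
Unshelve. all: by end_near.
Qed.

Variable N : nat.
Hypothesis hN : (2 <= N)%N.

Let p : R := N%:R / (N.-1)%:R.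

Lemma Nm1_gt0 : 0 < (N.-1)%:R :> R.
Proof. by rewrite ltr0n; case: N hN => // -[]. Qed.

Lemma Nm1p : (N.-1)%:R * p = N%:R.
Proof. by rewrite /p mulrC -mulrA mulVf ?mulr1 // gt_eqF // Nm1_gt0. Qed.

Lemma p_ge1 : 1 <= p.
Proof.
rewrite /p ler_pdivlMr ?Nm1_gt0 // mul1r ler_nat.
by case: (N) => //= n; exact: leqnSn.
Qed.

Lemma p_ge0 : 0 <= p.
Proof. exact: le_trans ler01 p_ge1. Qed.

Lemma m_ge1 : (1 <= N.-1)%N.
Proof. by case: N hN => // -[]. Qed.

Lemma Phi1E (t : R) : Phi1 N t = Fm N.-1 (`|t| `^ p).
Proof.
rewrite /Phi1 /Fm; congr (_ - _); apply: eq_bigr => j _; congr (_ / _).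
by rewrite mulrAC powRrM powR_mulrn // powR_ge0.
Qed.

Lemma Phi1_ge0 (t : R) : 0 <= Phi1 N t.
Proof.
rewrite Phi1E; apply: le_trans (Fm_ge _ (powR_ge0 _ _)).
by rewrite divr_ge0 ?exprn_ge0 ?powR_ge0.
Qed.

Lemma Phi1_0 : Phi1 N (0:R) = 0.
Proof.
rewrite Phi1E normr0 powR0; last by rewrite gt_eqF // (lt_le_trans ltr01 p_ge1).
rewrite /Fm expR0; case: (N.-1) m_ge1 => // k _.
rewrite big_nat_recl // expr0 fact0 divr1 big1 ?addr0 ?subrr // => i _.
by rewrite expr0n /= mul0r.
Qed.

Lemma Phi1_scale (lam y : R) : 1 <= lam -> 0 <= y ->
  lam `^ p * Phi1 N y <= Phi1 N (lam * y).
Proof.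
move=> l1 y0; have l0 : 0 <= lam by exact: le_trans ler01 l1.
rewrite !Phi1E normrM (ger0_norm l0) (ger0_norm y0) powRM //.
apply: Fm_scale; [exact: m_ge1|exact: powR_ge0|].
by rewrite -(powRr0 lam); apply: ler_powR => //; exact: p_ge0.
Qed.

Lemma Phi1_scaleN (t y : R) : 1 <= t -> 0 <= y ->
  t ^+ N * Phi1 N y <= Phi1 N (t ^+ N.-1 * y).
Proof.
move=> t1 y0; have t0 : 0 <= t by exact: le_trans ler01 t1.
have := @Phi1_scale (t ^+ N.-1) y (exprn_ege1 N.-1 t1) y0.
by rewrite -powR_mulrn // -powRrM Nm1p powR_mulrn.
Qed.

Lemma Phi1_ratio (r t : R) : 0 < r -> r <= t -> t * Phi1 N r <= r * Phi1 N t.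
Proof.
move=> r0 rt; have t0 : 0 < t by exact: lt_le_trans r0 rt.
have l1 : 1 <= t / r by rewrite ler_pdivlMr // mul1r.
have := @Phi1_scale (t / r) r l1 (ltW r0); rewrite mulrVK ?unitfE ?gt_eqF //.
move=> h; have h2 : t / r * Phi1 N r <= Phi1 N t.
  apply: le_trans h; rewrite ler_wpM2r ?Phi1_ge0 //.
  by apply: le1r_powR => //; exact: p_ge1.
by move: h2; rewrite mulrAC ler_pdivrMr // [_ * r]mulrC.
Qed.

Lemma Phi1_1 : 0 < Phi1 N (1:R).
Proof.
rewrite Phi1E normr1 powR1; apply: lt_le_trans (Fm_ge _ ler01).
by rewrite expr1n mul1r invr_gt0 ltr0n fact_gt0.
Qed.

End An.

Section Conj.
Variable R : realType.
Variable N : nat.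
Hypothesis hN : (2 <= N)%N.

Let A (s : R) := [set `|s| * t - Phi1 N t | t in [set t : R | 0 <= t]].

Lemma PhiT_ub (s : R) : has_ubound (A s).
Proof.
set K := 1 + `|s| / Phi1 N 1.
have P1 := @Phi1_1 R N.
have K1 : 1 <= K by rewrite /K lerDl divr_ge0 // ltW.
have K0 : 0 < K by exact: lt_le_trans ltr01 K1.
set r := K ^+ N.-1.
have r0 : 0 < r by rewrite exprn_gt0.
exists (`|s| * r) => _ [t t0 <-].
have [tr|rt] := leP t r.
  have := Phi1_ge0 N t; have : `|s| * t <= `|s| * r by rewrite ler_wpM2l.
  lra.
suff : `|s| * t <= Phi1 N t.
  have : 0 <= `|s| * r by rewrite mulr_ge0 // ltW.
  lra.
have hs := Phi1_scaleN hN K1 ler01; rewrite mulr1 -/r in hs.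
have hr := Phi1_ratio hN r0 (ltW rt).
have KN : K ^+ N = r * K.
  by rewrite /r -exprSr; case: (N) hN.
rewrite KN in hs.
have h1 : t * (r * K * Phi1 N 1) <= r * Phi1 N t.
  apply: le_trans hr; rewrite ler_wpM2l //; exact: ltW.
have h2 : t * (K * Phi1 N 1) <= Phi1 N t.
  rewrite -(ler_pM2l r0); suff -> : r * (t * (K * Phi1 N 1)) = t * (r * K * Phi1 N 1) by []; ring.
apply: le_trans h2; rewrite mulrC ler_wpM2l //.
by rewrite /K mulrDl mul1r divfK ?gt_eqF // lerDr ltW.
Qed.

Lemma PhiT_ge (s t : R) : 0 <= t -> `|s| * t - Phi1 N t <= Phi1t N s.
Proof. by move=> t0; apply: (ub_le_sup (PhiT_ub s)); exists t. Qed.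

Lemma PhiT_le (s y : R) : (forall t, 0 <= t -> `|s| * t - Phi1 N t <= y) ->
  Phi1t N s <= y.
Proof.
move=> h; apply: ge_sup; first by exists (`|s| * 0 - Phi1 N 0); exists (0:R) => //=.
by move=> _ [t t0 <-]; apply: h.
Qed.


Lemma PhiT_0 : Phi1t N (0:R) = 0.
Proof.
apply/eqP; rewrite eq_le; apply/andP; split.
  apply: PhiT_le => t _; rewrite normr0 mul0r sub0r oppr_le0; exact: Phi1_ge0.
by have := PhiT_ge 0 (lexx (0:R)); rewrite mulr0 Phi1_0 // subrr.
Qed.

Lemma PhiT_ge0 (s : R) : 0 <= Phi1t N s.
Proof. by have := PhiT_ge s (lexx (0:R)); rewrite mulr0 Phi1_0 // subrr. Qed.

Lemma PhiT_mono (a b : R) : `|a| <= `|b| -> Phi1t N a <= Phi1t N b.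
Proof.
move=> ab; apply: PhiT_le => t t0; apply: le_trans (PhiT_ge b t0).
by apply: lerB => //; rewrite ler_wpM2r.
Qed.

Lemma part_i (r : R) : 0 < r -> Phi1t N (Phi1 N r / r) <= Phi1 N r.
Proof.
move=> r0; apply: PhiT_le => t t0.
have P0 : 0 <= Phi1 N r / r by rewrite divr_ge0 ?Phi1_ge0 ?ltW.
rewrite ger0_norm //.
have [tr|rt] := leP t r.
  have : Phi1 N r / r * t <= Phi1 N r.
    apply: (@le_trans _ _ (Phi1 N r / r * r)); first by rewrite ler_wpM2l.
    by rewrite divfK // gt_eqF.
  have := Phi1_ge0 N t; lra.
have := Phi1_ratio hN r0 (ltW rt).
move=> h; have := Phi1_ge0 N r.
suff : Phi1 N r / r * t <= Phi1 N t by lra.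
by rewrite mulrAC ler_pdivrMr // mulrC [_ * r]mulrC.
Qed.

Lemma part_ii (t r : R) : 0 <= t -> 0 <= r ->
  Phi1t N (t * r) <= zeta N t * Phi1t N r.
Proof.
move=> t0 r0; rewrite /zeta.
have [t1|t1] := leP t 1.
  have tN : t ^+ N <= t.
    by case: (N) hN => // n _; rewrite exprSr ler_piMl // exprn_ile1.
  rewrite (max_l tN); apply: PhiT_le => x x0.
  rewrite normrM (ger0_norm t0) (ger0_norm r0).
  have h1 := PhiT_ge r x0; rewrite (ger0_norm r0) in h1.
  have h2 : t * (r * x - Phi1 N x) <= t * Phi1t N r by rewrite ler_wpM2l.
  have h3 : t * Phi1 N x <= Phi1 N x.
    by rewrite -{2}(mul1r (Phi1 N x)) ler_wpM2r ?Phi1_ge0.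
  suff : t * r * x - Phi1 N x <= t * (r * x - Phi1 N x) by lra.
  by rewrite mulrBr mulrA; apply: lerB.
have t1' : 1 <= t by exact: ltW.
have tN : t <= t ^+ N by apply: ler_eXnr => //; case: (N) hN.
rewrite (max_r tN); apply: PhiT_le => x x0.
set L := t ^+ N.-1.
have L0 : 0 < L by rewrite exprn_gt0 // (lt_le_trans ltr01 t1').
pose y := x / L.
have y0 : 0 <= y by rewrite divr_ge0 // ltW.
have xE : x = L * y by rewrite /y mulrC divfK // gt_eqF.
rewrite normrM (ger0_norm t0) (ger0_norm r0) xE.
have hs := Phi1_scaleN hN t1' y0; rewrite -/L in hs.
have h1 := PhiT_ge r y0; rewrite (ger0_norm r0) in h1.
have TN : t * L = t ^+ N by rewrite /L -exprS; case: (N) hN.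
have h2 : t ^+ N * (r * y - Phi1 N y) <= t ^+ N * Phi1t N r.
  by rewrite ler_wpM2l // exprn_ge0.
suff : t * r * (L * y) = t ^+ N * (r * y) by move=> ->; lra.
by rewrite -TN; ring.
Qed.

Lemma delta2 : Delta2 (@Phi1t R N).
Proof.
exists (2 ^+ N); split; first by rewrite exprn_gt0.
move=> t t0; have := part_ii (ler0n _ 2) t0; rewrite /zeta max_r //.
by apply: ler_eXnr; [case: (N) hN|rewrite ler1n].
Qed.

End Conj.

Section PSF.
Local Open Scope ereal_scope.
Context d1 d2 (T1 : measurableType d1) (T2 : measurableType d2) (R : realType).
Variable m1 : {sigma_finite_measure set T1 -> \bar R}.
Variable m2 : {sigma_finite_measure set T2 -> \bar R}.

Lemma pm_sigma_finite : sigma_finite setT (m1 \x m2).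
Proof.
have /sigma_finiteP[F [TF ndF Foo]] := sigma_finiteT m1.
have /sigma_finiteP[G [TG ndG Goo]] := sigma_finiteT m2.
exists (fun n => F n `*` G n).
 rewrite -setXTT TF TG predeqE => -[x y]; split.
    move=> [/= [n _ Fnx] [k _ Gky]]; exists (maxn n k) => //; split.
    - by move: x Fnx; exact/subsetPset/ndF/leq_maxl.
    - by move: y Gky; exact/subsetPset/ndG/leq_maxr.
  by move=> [n _ []/= ? ?]; split; exists n.
move=> k; have [? ?] := Foo k; have [? ?] := Goo k.
split; first exact: measurableX.
by rewrite product_measure1E// lte_mul_pinfty// ge0_fin_numE.
Qed.

Definition pm_sf : {sigma_finite_measure set (T1 * T2)%type -> \bar R} :=
  HB.pack_for (SigmaFiniteMeasure.type (T1 * T2)%type R) (m1 \x m2)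
    (@Measure_isSigmaFinite.Build _ _ _ (m1 \x m2) pm_sigma_finite).
End PSF.

Lemma RN_meas (R : realType) n :
  {m : {sigma_finite_measure set (ms_car (RN R n)) -> \bar R} | ms_mu (RN R n) = m}.
Proof.
elim: n => [|n [m hm]].
  by exists (SigmaFiniteMeasure.clone _ _ _ (@lebesgue_measure R) _).
by exists (@pm_sf _ _ _ _ R (SigmaFiniteMeasure.clone _ _ _ (@lebesgue_measure R) _) m); rewrite /= hm.
Qed.
Lemma RN_norm_meas (R : realType) n : measurable_fun setT (ms_norm (RN R n)).
Proof.
elim: n => [|n IH]; first exact: measurable_realfun.normr_measurable.
rewrite /=.
apply: measurable_realfun.measurable_maxr.
  apply: measurableT_comp; first exact: measurable_realfun.normr_measurable.
  exact: measurable_fst.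
by apply: measurableT_comp; [exact: IH|exact: measurable_snd].
Qed.

Section EL.
Context {R : realType} (X : mspace R) (Th : R -> R).
Variable m : {measure set (ms_car X) -> \bar R}.
Hypothesis hm : ms_mu X = m.
Hypothesis hn : measurable_fun setT (ms_norm X).
Hypothesis Th0 : Th 0 = 0.
Hypothesis Thge0 : forall s, 0 <= Th s.
Hypothesis Thmono : forall a b, 0 <= a -> a <= b -> Th a <= Th b.
Variable K : R -> R.
Hypothesis K0 : forall c, 0 <= c -> 0 <= K c.
Hypothesis Thsc : forall c s, 0 <= c -> 0 <= s -> Th (c * s) <= K c * Th s.

Lemma mball r : measurable [set x | ms_norm X x <= r].
Proof.
rewrite (_ : [set x | _] = setT `&` (ms_norm X @^-1` `]-oo, r])).
  exact: hn.
by apply/seteqP; split => x /=; rewrite in_itv /=; [move=> ->|case].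
Qed.

Lemma mTh (w : ms_car X -> R) (c : R) : 0 < c -> measurable_fun setT w ->
  measurable_fun setT (fun x => (Th (`|w x| / c))%:E).
Proof.
move=> c0 mw; apply/measurable_EFinP.
pose g s := Th (Num.max s 0).
have gnd : {homo g : s t / s <= t}.
  move=> s t st; apply: Thmono; first by rewrite le_max lexx orbT.
  by rewrite ge_max !le_max st lexx !orbT.
have -> : (fun x => Th (`|w x| / c)) = g \o (fun x => `|w x| / c).
  by apply/funext => x /=; rewrite /g max_l // divr_ge0 // ltW.
apply: measurableT_comp; first exact: measurable_realfun.nondecreasing_measurable.
apply: measurable_realfun.measurable_funM => //.
apply: measurableT_comp => //; exact: measurable_realfun.normr_measurable.
Qed.


Let Lm u := measurable_fun setT u /\
  (forall r, m.-integrable [set x | ms_norm X x <= r] (EFin \o u)) /\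
  exists l, 0 < l /\ (\int[m]_x (Th (`|u x| / l))%:E < +oo)%E.

Lemma LE : LOrlicz X Th = Lm.
Proof. by rewrite /LOrlicz /modular hm. Qed.

Lemma luxE u : luxemburg X Th u = ereal_inf [set l%:E | l in
  [set l | 0 < l /\ (\int[m]_x (Th (`|u x| / l))%:E <= 1)%E]].
Proof. by rewrite /luxemburg /modular hm. Qed.

Lemma EL_eq : EOrlicz X Th = LOrlicz X Th.
Proof.
rewrite /EOrlicz LE; apply/seteqP; split => u; first by case.
move=> Lu; split => // e e0.
case: (Lu) => mu_ [locu [l [l0 modfin]]].
set a := e / 2.
have a0 : 0 < a by rewrite divr_gt0.
pose B (n : nat) := [set x | ms_norm X x <= n%:R].
pose v (n : nat) x := u x * \1_(B n) x.
have vE n x : v n x = if ms_norm X x <= n%:R then u x else 0.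
  rewrite /v indicE; have [h|h] := boolP (ms_norm X x <= n%:R).
    by rewrite mem_set // mulr1.
  by rewrite memNset ?mulr0 //; exact/negP.
have mv n : measurable_fun setT (v n).
  apply: measurable_funM => //; apply: measurable_indic; exact: mball.
have vle n x : `|v n x| <= `|u x|.
  by rewrite vE; case: ifP => _; rewrite ?normr0.
have uvle n x : `|u x - v n x| <= `|u x|.
  by rewrite vE; case: ifP => _; rewrite ?subrr ?normr0 ?subr0.
have Lv n : Lm (v n).
  split; first exact: mv.
  split.
    move=> r; apply: (le_integrable (mball r)) (locu r).
      by apply: measurable_funTS; apply/measurable_EFinP.
    by move=> x _ /=; rewrite lee_fin.
  exists l; split => //; apply: le_lt_trans modfin.
  apply: ge0_le_integral => //; [by move=> x _; rewrite lee_fin|exact: mTh|exact: mTh|].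
  move=> x _; rewrite lee_fin; apply: Thmono; first by rewrite divr_ge0 // ltW.
  by rewrite ler_pM2r ?invr_gt0.
pose g x := (Th (`|u x| / a))%:E.
have mg : measurable_fun setT g by exact: mTh.
have gle x : (g x <= (K (l / a) * Th (`|u x| / l))%:E)%E.
  rewrite lee_fin /g.
  have -> : `|u x| / a = (l / a) * (`|u x| / l).
    by field; rewrite !gt_eqF.
  by apply: Thsc; rewrite divr_ge0 // ltW.
have ig : m.-integrable setT g.
  apply/integrableP; split => //.
  have mTl : measurable_fun setT (fun x => (Th (`|u x| / l))%:E) by exact: mTh.
  apply: (@le_lt_trans _ _ (\int[m]_x ((K (l / a))%:E * (Th (`|u x| / l))%:E))%E).
    apply: ge0_le_integral => //.
    - exact: measurableT_comp.
    - apply: measurable_funeM; exact: mTl.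
    - move=> x _; rewrite gee0_abs; last by rewrite lee_fin. by have := gle x; rewrite EFinM.
  rewrite ge0_integralZl_EFin //; last by apply: K0; rewrite divr_ge0 // ltW.
  - by rewrite lte_mul_pinfty // ?lee_fin ?K0 ?divr_ge0 ?ltW.
  - by move=> x _; rewrite lee_fin.

pose f_ (n : nat) (x : ms_car X) := (Th (`|u x - v n x| / a))%:E.
have mf_ n : measurable_fun setT (f_ n).
  by apply: mTh => //; apply: measurable_funB.
have f_f : {ae m, forall x, setT x -> f_ ^~ x @ \oo --> (cst 0%E) x}.
  apply: aeW => x _; apply: cvg_near_cst.
  have := nbhs_infty_ger (ms_norm X x); apply: filterS => n hxn.
  by rewrite /f_ vE hxn subrr normr0 mul0r Th0.
have f_g : {ae m, forall x n, setT x -> (`|f_ n x| <= g x)%E}.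
  apply: aeW => x n _; rewrite gee0_abs ?lee_fin //.
  apply: Thmono; first by rewrite divr_ge0 // ltW.
  by rewrite ler_pM2r ?invr_gt0.
have [_ _ hc] := dominated_convergence measurableT mf_ (measurable_cst _) f_f ig f_g.
rewrite integral0 in hc.
have := hc _ (open_ereal_lt' (@lte01 R)).
case=> N0 _ hN0; have hle := hN0 N0 (leqnn _); rewrite /= in hle.
exists (v N0); split; first exact: Lv.
split.
  exists N0%:R => x hx; rewrite vE ifN //; by rewrite -ltNge.
rewrite luxE; apply: (@le_lt_trans _ _ a%:E).
  apply: ereal_inf_lbound; exists a => //; split => //.
  exact: ltW.
by rewrite lte_fin /a; lra.
Qed.

End EL.

Unset Implicit Arguments.

Theorem lemma2p5 (R : realType) (N : nat) (hN : (2 <= N)%N) :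
  (forall r : R, 0 < r -> Phi1t N (Phi1 N r / r) <= Phi1 N r) /\
  (forall t r : R, 0 <= t -> 0 <= r -> Phi1t N (t * r) <= zeta N t * Phi1t N r) /\
  Delta2 (@Phi1t R N) /\
  EOrlicz (Rn R N) (@Phi1t R N) = LOrlicz (Rn R N) (@Phi1t R N).
Proof.
split; first by move=> r r0; exact: part_i.
split; first by move=> t r t0 r0; exact: part_ii.
split; first exact: delta2.
have [m hm] := RN_meas R N.-1.
have Th0 : @Phi1t R N 0 = 0 by exact: PhiT_0.
have Thge0 : forall s : R, 0 <= Phi1t N s by move=> s; exact: PhiT_ge0.
have Thmono : forall a b : R, 0 <= a -> a <= b -> Phi1t N a <= Phi1t N b.
  move=> a b a0 ab; apply: PhiT_mono.
  by []. by rewrite !ger0_norm // (le_trans a0 ab).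
have K0 : forall c : R, 0 <= c -> 0 <= zeta N c.
  by move=> c c0; rewrite /zeta le_max c0.
have Thsc : forall c s : R, 0 <= c -> 0 <= s -> Phi1t N (c * s) <= zeta N c * Phi1t N s.
  by move=> c s c0 s0; exact: part_ii.
have H := (@EL_eq R (Rn R N) (@Phi1t R N) m hm (@RN_norm_meas R N.-1) Th0 Thge0 Thmono (zeta N) K0 Thsc).
exact H.
Qed.
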